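(* Let $S$ be an additively reduced semidomain and $G$ a torsion-free abelian group, totally ordered compatibly with addition, in which every subset that is bounded below is well-ordered. Let $f=\sum_{i=0}^\infty s_ix^{g_i}\in S[\![G]\!]$ with $s_i\neq0$ for all $i\in\mathbb{N}_0$. If for some $N\in\mathbb{N}_0$ the sequence $(g_{N+i+1}-g_{N+i})_{i\in\mathbb{N}_0}$ is strictly increasing, then $f$ is monolithic.
   Context: A semidomain is a subsemiring (containing $0$ and $1$) of an integral domain. $S$ is additively reduced if $0$ is the only invertible element of $(S,+)$. $S[\![G]\!]=\{\sum_{i=0}^\infty s_ix^{g_i} : s_i\in S,\ g_i\in G,\ g_i<g_{i+1}\}$ (with respect to the given order on $G$) with operations defined as for polynomials. A nonzero $f$ is monolithic if $f=pq$ with $p,q\in S[\![G]\!]$ implies one of $p,q$ is a monomial $sx^g$. *)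

(* Defs.v *)
From HB Require Import structures.
From mathcomp Require Import all_boot all_order all_algebra.
From mathcomp Require Import boolp classical_sets functions cardinality fsbigop.
Set Implicit Arguments. Unset Strict Implicit. Unset Printing Implicit Defensive.
Import Order.TTheory GRing.Theory Num.Theory.
Local Open Scope ring_scope.

Definition semidomain (D : idomainType) (S : {pred D}) : Prop :=
  [/\ 0 \in S, 1 \in S,
      (forall x y, x \in S -> y \in S -> x + y \in S) &
      (forall x y, x \in S -> y \in S -> x * y \in S)].

Definition additively_reduced (D : idomainType) (S : {pred D}) : Prop :=
  forall x, x \in S -> (exists2 y, y \in S & x + y = 0) -> x = 0.

Definition ordered_group (G : zmodType) (le : rel G) : Prop :=
  [/\ (forall a, le a a),
      (forall a b, le a b -> le b a -> a = b),
      (forall a b c, le a b -> le b c -> le a c),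
      (forall a b, le a b || le b a) &
      (forall a b c, le a b -> le (a + c) (b + c))].

Definition torsion_free (G : zmodType) : Prop :=
  forall (n : nat) (x : G), x *+ n.+1 = 0 -> x = 0.

Definition ltG (G : zmodType) (le : rel G) (a b : G) : Prop := le a b /\ a <> b.

Definition well_ordered (G : zmodType) (le : rel G) (A : G -> Prop) : Prop :=
  forall B : G -> Prop, (forall x, B x -> A x) -> (exists x, B x) ->
    exists2 m, B m & forall x, B x -> le m x.

Definition bounded_below_well_ordered (G : zmodType) (le : rel G) : Prop :=
  forall A : G -> Prop, (exists b, forall x, A x -> le b x) -> well_ordered le A.

(** Elements of S[[G]] are represented by their coefficient functions
    c : G -> D.  c lies in S[[G]] iff all coefficients lie in S and
    c = sum_i c(g_i) x^{g_i} for some strictly increasing g : nat -> G,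
    i.e. the support of c is contained in the range of such a g. *)
Definition in_series (D : idomainType) (S : {pred D}) (G : zmodType)
    (le : rel G) (c : G -> D) : Prop :=
  (forall h, c h \in S) /\
  exists g : nat -> G, (forall i, ltG le (g i) (g i.+1)) /\
    (forall h, c h <> 0 -> exists i, h = g i).

Definition series_mul (D : idomainType) (G : zmodType) (p q : G -> D) : G -> D :=
  fun h => (\sum_(a \in [set: G]) p a * q (h - a))%R.

Definition monomial (D : idomainType) (G : zmodType) (s : D) (g : G) : G -> D :=
  fun h => if h == g then s else 0.

Definition is_monomial (D : idomainType) (S : {pred D}) (G : zmodType)
    (p : G -> D) : Prop :=
  exists2 s, s \in S & exists g, p = monomial s g.

Definition monolithic (D : idomainType) (S : {pred D}) (G : zmodType)
    (le : rel G) (f : G -> D) : Prop :=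
  (exists h, f h <> 0) /\
  forall p q : G -> D, in_series S le p -> in_series S le q ->
    f = series_mul p q -> is_monomial S p \/ is_monomial S q.

(* Main.v *)
From HB Require Import structures.
From mathcomp Require Import all_boot all_order all_algebra.
From mathcomp Require Import boolp classical_sets functions cardinality fsbigop.
Require Import Defs.
Set Implicit Arguments. Unset Strict Implicit. Unset Printing Implicit Defensive.
Import Order.TTheory GRing.Theory Num.Theory.
Local Open Scope ring_scope.


Section OG.
Variables (G : zmodType) (le : rel G).
Hypothesis Hle : ordered_group le.

Lemma leR a b c : le a b -> le (a + c) (b + c).
Proof. by case: Hle => _ _ _ _; apply. Qed.
Lemma leL a b c : le a b -> le (c + a) (c + b).
Proof. by rewrite ![c + _]addrC; apply: leR. Qed.
Lemma leRc a b c : le (a + c) (b + c) -> le a b.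
Proof. by move=> h; have := leR (- c) h; rewrite !addrK. Qed.
Lemma leLc a b c : le (c + a) (c + b) -> le a b.
Proof. by rewrite ![c + _]addrC; apply: leRc. Qed.
Lemma letr a b c : le a b -> le b c -> le a c.
Proof. by case: Hle => _ _ + _ _; apply. Qed.
Lemma leanti a b : le a b -> le b a -> a = b.
Proof. by case: Hle => _ + _ _ _; apply. Qed.
Lemma lerefl a : le a a.
Proof. by case: Hle. Qed.
Lemma letot a b : le a b || le b a.
Proof. by case: Hle. Qed.
Lemma leD a b c d : le a b -> le c d -> le (a + c) (b + d).
Proof. by move=> h1 h2; apply: letr (leR c h1) (leL b h2). Qed.
Lemma leNge a b : ~~ le a b -> le b a.
Proof. by move=> h; have := letot a b; rewrite (negbTE h). Qed.

Lemma mono_le (u : nat -> G) : (forall i, ltG le (u i) (u i.+1)) ->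
  forall i k, le (u i) (u (i + k)%N).
Proof.
move=> hu i; elim=> [|k IH]; first by rewrite addn0 lerefl.
by apply: letr IH _; rewrite addnS; case: (hu (i + k)%N).
Qed.

Lemma mono_lt (u : nat -> G) : (forall i, ltG le (u i) (u i.+1)) ->
  forall i j, (i < j)%N -> le (u i) (u j) /\ u i <> u j.
Proof.
move=> hu i j ij; have -> : j = (i.+1 + (j - i.+1))%N by rewrite subnKC.
split; first by apply: letr (mono_le hu i.+1 _); case: (hu i).
move=> e; case: (hu i) => h1 h2; apply: h2; apply: leanti h1 _.
by rewrite e; apply: mono_le hu _ _.
Qed.

Lemma leNN x a b : le (x - a) (x - b) -> le b a.
Proof.
move=> h; have h1 : le (- a) (- b) by apply: (@leLc _ _ x).
have := leR (a + b) h1; rewrite (addKr a b) (addrC a b) (addKr b a); done.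
Qed.

Hypothesis Hwo : bounded_below_well_ordered le.

Lemma unbounded (u : nat -> G) : (forall i, ltG le (u i) (u i.+1)) ->
  forall H, exists n, ~~ le (u n) H.
Proof.
move=> hu H; apply: contrapT => nex.
have all_le : forall n, le (u n) H.
  by move=> n; apply/negPn/negP => hn; apply: nex; exists n.
pose B := fun x => exists n, x = H - u n.
have bb : exists b, forall x, B x -> le b x.
  exists 0 => x [n ->]; have := leR (- u n) (all_le n); by rewrite subrr.
have [m [k ->] hm] := Hwo bb (fun x hx => hx) (ex_intro _ (H - u 0) (ex_intro _ 0%N erefl)).
have h := hm (H - u k.+1) (ex_intro _ k.+1 erefl).
have h2 : le (u k.+1) (u k) by apply: leNN h.
case: (hu k) => h1 hne; by apply: hne; apply: leanti h1 h2.
Qed.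
End OG.

Section Main.
Variables (D : idomainType) (S : {pred D}) (G : zmodType) (le : rel G)
    (f : G -> D) (s : nat -> D) (g : nat -> G).
Hypotheses (HS : semidomain S) (HAR : additively_reduced S)
  (Hle : ordered_group le) (Hwo : bounded_below_well_ordered le)
  (hg : forall i, ltG le (g i) (g i.+1)) (sS : forall i, s i \in S)
  (s0 : forall i, s i <> 0) (fg : forall i, f (g i) = s i)
  (f0 : forall h, (forall i, h <> g i) -> f h = 0).
Variable N : nat.
Hypothesis hN : forall i : nat,
     ltG le (g (N + i)%N.+1 - g (N + i)%N) (g (N + i.+1)%N.+1 - g (N + i.+1)%N).

Lemma sumS (l : seq G) (F : G -> D) : (forall x, F x \in S) -> \sum_(x <- l) F x \in S.
Proof.
case: HS => S0 _ Sadd _ hF; elim: l => [|x l IH]; first by rewrite big_nil.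
by rewrite big_cons; apply: Sadd.
Qed.

Lemma sum0 (l : seq G) (F : G -> D) : (forall x, F x \in S) ->
  \sum_(x <- l) F x = 0 -> forall x, x \in l -> F x = 0.
Proof.
move=> hF; elim: l => [|y l IH]; first by [].
rewrite big_cons => e x; rewrite inE => /orP [/eqP ->|xl].
  by apply: HAR => //; exists (\sum_(x <- l) F x) => //; apply: sumS.
apply: IH => //; have Fy : F y = 0.
  by apply: HAR => //; exists (\sum_(x <- l) F x) => //; apply: sumS.
by move: e; rewrite Fy add0r.
Qed.

Lemma supp_g h : f h <> 0 -> exists i, h = g i.
Proof.
move=> fh; apply: contrapT => ne; apply: fh; apply: f0 => i e; apply: ne; by exists i.
Qed.

Lemma gap (d : G) : le 0 d -> d <> 0 ->
  exists M, forall j k, g k = g j + d -> le (g j) (g M).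
Proof.
move=> d0 dn0.
pose u i := g (N + i)%N.+1 - g (N + i)%N.
have [n hn] := unbounded Hle Hwo hN d.
exists (N + n)%N => j k e.
case: (leqP j (N + n)) => hj.
  by have := mono_le Hle hg j (N + n - j); rewrite subnKC.
exfalso.
case: (leqP k j) => hk.
  have := mono_le Hle hg k (j - k); rewrite subnKC // e => h.
  apply: dn0; apply: (leanti Hle) => //.
  by apply: (@leLc _ _ Hle _ _ (g j)); rewrite addr0.
have h1 : le (g j.+1) (g k) by have := mono_le Hle hg j.+1 (k - j.+1); rewrite subnKC.
have h2 : le (u (n + (j - (N + n)))%N) d.
  rewrite /u addnA subnKC; last exact: ltnW.
  apply: (@leLc _ _ Hle _ _ (g j)); rewrite -e addrC subrK; exact h1.
have h3 := mono_le Hle hN n (j - (N + n)).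
by move/negP: hn; apply; apply: (letr Hle) h3 h2.
Qed.

End Main.

Section Prod.
Variables (D : idomainType) (S : {pred D}) (G : zmodType) (le : rel G).
Hypotheses (HS : semidomain S) (HAR : additively_reduced S)
  (Hle : ordered_group le) (Hwo : bounded_below_well_ordered le).
Variables (p q : G -> D).
Hypotheses (hp : in_series S le p) (hq : in_series S le q).

Lemma AB a b : p a <> 0 -> q b <> 0 -> series_mul p q (a + b) <> 0.
Proof.
move=> pa qb.
case: hp => pS [gp [hgp gpS]]; case: hq => qS [gq [hgq gqS]].
pose F := fun x => p x * q (a + b - x).
have [n hn] := unbounded Hle Hwo hgp (a + b - gq 0%N).
have fin : finite_set ([set: G] `&` F @^-1` [set~ 0]).
  apply: (@sub_finite_set _ _ (gp @` `I_n)); last exact/finite_image/finite_II.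
  move=> x [_ /= Fx].
  have px : p x <> 0 by move=> e; apply: Fx; rewrite /F e mul0r.
  have qx : q (a + b - x) <> 0 by move=> e; apply: Fx; rewrite /F e mulr0.
  have [i ei] := gpS x px; have [k ek] := gqS _ qx.
  exists i; last by rewrite ei.
  rewrite /=; apply: contraT; rewrite -leqNgt => ni.
  have h1 := mono_le Hle hgp n (i - n); rewrite subnKC // -ei in h1.
  have h2 := mono_le Hle hgq 0 k; rewrite add0n -ek in h2.
  have h3 : le x (a + b - gq 0%N).
    apply: (leNN Hle (x := a + b)).
    by rewrite opprB addrC subrK.
  by case/negP: hn; apply: (letr Hle) h1 h3.
have ina := in_finite_support fin a.
rewrite /series_mul => e.
have Fa : F a <> 0 by rewrite /F (addrC a b) addrK; apply/eqP; rewrite mulf_neq0 //; apply/eqP.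
apply: (Fa); apply: (sum0 HS HAR _ e).
  by case: HS => _ _ _ Sm x; apply: Sm.
by rewrite ina; apply/mem_set; split.
Qed.

Lemma BA h : series_mul p q h <> 0 -> exists a, p a <> 0 /\ q (h - a) <> 0.
Proof.
move=> hh; apply: contrapT => ne; apply: hh; rewrite /series_mul.
apply: fsbig1 => x _.
have [px|px] := eqVneq (p x) 0; first by rewrite px mul0r.
have [qx|qx] := eqVneq (q (h - x)) 0; first by rewrite qx mulr0.
by exfalso; apply: ne; exists x; split; apply/eqP.
Qed.
End Prod.

Lemma two (D : idomainType) (S : {pred D}) (G : zmodType) (le : rel G) (p : G -> D) :
  semidomain S -> ordered_group le -> in_series S le p -> ~ is_monomial S p ->
  exists a0 a1, [/\ le a0 a1, a0 <> a1, p a0 <> 0 & p a1 <> 0].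
Proof.
move=> [S0 _ _ _] Hle [pS _] nm; apply: contrapT => ne; apply: nm.
case: (pselect (exists a, p a <> 0)) => [[a pa]|nx]; last first.
  exists 0 => //; exists 0; apply/funext => h; rewrite /monomial; case: ifP => _;
  by apply: contrapT => ph; apply: nx; exists h.
exists (p a); first exact: pS.
exists a; apply/funext => h; rewrite /monomial; case: ifP => [/eqP -> //|/negP hne].
apply: contrapT => ph; apply: ne.
case/orP: (letot Hle a h) => hl.
  by exists a, h; split => // e; apply: hne; rewrite e.
by exists h, a; split => // e; apply: hne; rewrite e.
Qed.

Theorem corollary4p5 (D : idomainType) (S : {pred D}) (G : zmodType) (le : rel G)
    (f : G -> D) (s : nat -> D) (g : nat -> G) :
  semidomain S -> additively_reduced S ->
  torsion_free G -> ordered_group le -> bounded_below_well_ordered le ->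
  (forall i, ltG le (g i) (g i.+1)) ->
  (forall i, s i \in S) -> (forall i, s i <> 0) ->
  (forall i, f (g i) = s i) -> (forall h, (forall i, h <> g i) -> f h = 0) ->
  (exists N : nat, forall i : nat,
     ltG le (g (N + i)%N.+1 - g (N + i)%N) (g (N + i.+1)%N.+1 - g (N + i.+1)%N)) ->
  monolithic S le f.
Proof.
move=> HS HAR _ Hle Hwo hg sS s0 fg f0 [N hN]; split; first by exists (g 0%N); rewrite fg.
move=> p q hp hq fpq.
case: (pselect (is_monomial S p)) => [?|np]; first by left.
case: (pselect (is_monomial S q)) => [?|nq]; first by right.
exfalso.
have [a0 [a1 [la na pa0 pa1]]] := two HS Hle hp np.
have [b0 [b1 [lb nb qb0 qb1]]] := two HS Hle hq nq.
have fab a b : p a <> 0 -> q b <> 0 -> f (a + b) <> 0.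
  by move=> ? ?; rewrite fpq; apply: (AB HS HAR Hle Hwo hp hq).
have dpos x y : le x y -> x <> y -> le 0 (y - x) /\ y - x <> 0.
  move=> lxy nxy; split; first by have := leR Hle (- x) lxy; rewrite subrr.
  by move/eqP; rewrite subr_eq0 => /eqP e; apply: nxy.
have [dA0 dAn0] := dpos _ _ la na.
have [dB0 dBn0] := dpos _ _ lb nb.
have [M1 hM1] := gap Hle Hwo hg hN dA0 dAn0.
have [M2 hM2] := gap Hle Hwo hg hN dB0 dBn0.
have bd1 b : q b <> 0 -> le (a0 + b) (g M1).
  move=> qb; have [j ej] := supp_g f0 (fab _ _ pa0 qb).
  have [k ek] := supp_g f0 (fab _ _ pa1 qb).
  rewrite ej; apply: (hM1 j k); rewrite -ej -ek.
  by rewrite addrAC addrCA subrr addr0.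
have bd2 a : p a <> 0 -> le (a + b0) (g M2).
  move=> pa; have [j ej] := supp_g f0 (fab _ _ pa qb0).
  have [k ek] := supp_g f0 (fab _ _ pa qb1).
  rewrite ej; apply: (hM2 j k); rewrite -ej -ek.
  by rewrite -addrA [b0 + _]addrC subrK.
have [n hn] := unbounded Hle Hwo hg (g M1 + g M2 - (a0 + b0)).
have fn : series_mul p q (g n) <> 0 by rewrite -fpq fg.
have [a [pa qa]] := BA fn.
have h := leD Hle (bd1 _ qa) (bd2 _ pa).
have E : a0 + (g n - a) + (a + b0) = g n + (a0 + b0).
  by rewrite addrA -(addrA a0) subrK addrCA addrA.
rewrite E in h.
case/negP: hn; have := leR Hle (- (a0 + b0)) h; by rewrite addrK.
Qed.
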